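(* Let $S$ be a simple $(l,r)$-framed algebra, $\alpha\in C_S$, $(d^1,c^1),(d^2,c^2)\in I_S$, $a\in S_{(0,\alpha)}$, $v_1\in S_{(d^1,c^1)}$, $v_2\in S_{(d^2,c^2)}$. Then for every $\gamma\in\mathbb{Z}_2^{d^1d^2}$, $a\cdot\big(v_1\cdot_{(d^1+d^2,(d^1+d^2)_\perp(c^1+c^2)+\gamma)}v_2\big)=(-1)^{\frac12|d^1\alpha|}(-1)^{|\alpha c^1|+|d^1d^2\alpha|+|\gamma\alpha|+|d^1\alpha c^2|}\,v_1\cdot_{(d^1+d^2,(d^1+d^2)_\perp(c^1+c^2+\alpha)+\gamma)}(a\cdot v_2)$, and $a\cdot(v_1\cdot v_2)=(-1)^{|d^1_\perp\alpha|+|d^1\alpha c^2|}(a\cdot v_1)\cdot v_2$.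
   Context: Let $\mathrm{IS}=\{0,\frac12,\frac1{16}\}$ with fusion rule $\star$ (values are subsets): $0\star h=h\star0=\{h\}$, $\frac12\star\frac12=\{0\}$, $\frac12\star\frac1{16}=\frac1{16}\star\frac12=\{\frac1{16}\}$, $\frac1{16}\star\frac1{16}=\{0,\frac12\}$; $A(h_0,h_1,h_2,h_3)=\{h: h\in h_2\star h_3,\ h_0\in h_1\star h\}$. For $h\in A(h_0,h_1,h_2,h_3)$, $h'\in A(h_0,h_2,h_1,h_3)$ define $B^{h,h'}_{h_0,h_1,h_2,h_3}$: $B_{*,0,*,*}=B_{*,*,0,*}=1$; $B_{*,\frac12,\frac12,*}=-1$; $B_{a,\frac12,\frac1{16},a'}=B_{a,\frac1{16},\frac12,a'}=i$ if $a$ or $a'$ is $\frac12$, else $-i$; $B^{b,b'}_{a,\frac1{16},\frac1{16},a'}=e^{-\pi i/8}\cdot\{1$ if $a,a'\ne\frac1{16},a=a'$; $i$ if $a,a'\neq\frac1{16},a\ne a'$; $\frac{1+i}2$ if $a=a'=\frac1{16},b=b'$; $\frac{1-i}2$ if $a=a'=\frac1{16},b\neq b'\}$. $\mathrm{IS}^{(l,r)}=\mathrm{IS}^l\times\mathrm{IS}^r$, $\lambda=(h_1,..,h_l,\bar h_1,..,\bar h_r)$, $s(\lambda)=\sum h_i-\sum\bar h_j$; $\star$, $A$ componentwise; $B^{\lambda,\lambda'}_{\lambda^0,\dots,\lambda^3}=\prod_{i\le l}B^{h_i,h'_i}_{h^0_i,\dots,h^3_i}\prod_{j\le r}\overline{B^{\bar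 h_j,\bar h'_j}_{\bar h^0_j,\dots,\bar h^3_j}}$. An $(l,r)$-framed algebra: finite-dimensional $\mathrm{IS}^{(l,r)}$-graded $S=\bigoplus S_\lambda$ over $\mathbb{C}$ with bilinear product, nonzero $1\in S_0$, $a\cdot_\lambda b$ the $S_\lambda$-component of $a\cdot b$, satisfying (FA1) $S_\lambda=0$ unless $s(\lambda)\in\mathbb{Z}$; (FA2) $S_0=\mathbb{C}1$, $1$ a two-sided unit; (FA3) $S_{\lambda^1}\cdot S_{\lambda^2}\subset\bigoplus_{\lambda\in\lambda^1\star\lambda^2}S_\lambda$; (FA4) $a_2\cdot_{\lambda^0}(a_1\cdot_{\lambda'}a_3)=\sum_{\lambda\in A(\lambda^0,\lambda^1,\lambda^2,\lambda^3)}B^{\lambda,\lambda'}_{\lambda^0,\lambda^1,\lambda^2,\lambda^3}a_1\cdot_{\lambda^0}(a_2\cdot_\lambda a_3)$ for $a_i\in S_{\lambda^i}$, $\lambda'\in A(\lambda^0,\lambda^2,\lambda^1,\lambda^3)$. Ideal: graded subspace $M$ with $S\cdot M\subset M$; simple: only ideals $0$ and $S$. Identify $\mathrm{IS}$ with $\{(d,c)\in\mathbb{Z}_2^2:dc=0\}$ via $0\leftrightarrow(0,0)$, $\frac12\leftrightarrow(0,1)$, $\frac1{16}\leftrightarrow(1,0)$, and componentwise $\mathrm{IS}^{(l,r)}$ with pairs $(d,c)\in(\mathbb{Z}_2^{l+r})^2$, $dc=0$ (componentwise product); $S_{(d,c)}$ is the graded piece. For $c\in\mathbb{Z}_2^{l+r}$,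 $|c|=|c|_l-|c|_r$ with $|c|_l,|c|_r$ the numbers of ones in the first $l$, last $r$ coordinates; $d_\perp=1^{l+r}+d$; $\mathbb{Z}_2^d=\{\gamma:d\gamma=\gamma\}$. $C_S=\{\alpha:S_{(0,\alpha)}\neq0\}$, $I_S=\{(d,c):S_{(d,c)}\ne0\}$. *)

(* Defs.v *)
From Stdlib Require Import Reals.
From HB Require Import structures.
From mathcomp Require Import all_boot all_algebra all_field.
From mathcomp Require Import complex.
From mathcomp Require Import Rstruct.
Set Implicit Arguments. Unset Strict Implicit. Unset Printing Implicit Defensive.
Import GRing.Theory Num.Theory.
Local Open Scope ring_scope.

Definition CC : fieldType := complex R.
Definition Ci : CC := Complex 0 1.
Definition e_m_pi_i_8 : CC := Complex (cos (PI / 8)%R) (- sin (PI / 8)%R).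

Inductive IS := h0 | h12 | h116.

Definition IS_code (h : IS) : 'I_3 :=
  match h with h0 => inord 0 | h12 => inord 1 | h116 => inord 2 end.
Definition IS_decode (i : 'I_3) : IS :=
  match val i with 0 => h0 | 1 => h12 | _ => h116 end.
Lemma IS_codeK : cancel IS_code IS_decode.
Proof. by case; rewrite /IS_decode /= inordK. Qed.
HB.instance Definition _ := Countable.copy IS (can_type IS_codeK).
HB.instance Definition _ := Finite.copy IS (can_type IS_codeK).

Definition IS_val (h : IS) : rat :=
  match h with h0 => 0 | h12 => 1 / 2 | h116 => 1 / 16 end.

(* fusion rule: fus h1 h2 h <-> h \in h1 * h2 *)
Definition fus (a b h : IS) : bool :=
  match a, b with
  | h0, _ => h == b
  | _, h0 => h == a
  | h12, h12 => h == h0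
  | h12, h116 | h116, h12 => h == h116
  | h116, h116 => (h == h0) || (h == h12)
  end.

Definition inA1 (x0 x1 x2 x3 h : IS) : bool := fus x2 x3 h && fus x1 h x0.

Definition B1 (h h' a h1 h2 a' : IS) : CC :=
  match h1, h2 with
  | h0, _ | _, h0 => 1
  | h12, h12 => -1
  | h12, h116 | h116, h12 =>
      if (a == h12) || (a' == h12) then Ci else - Ci
  | h116, h116 =>
      e_m_pi_i_8 *
      (if (a != h116) && (a' != h116) then
         (if a == a' then 1 else Ci)
       else if (a == h116) && (a' == h116) then
         (if h == h' then (1 + Ci) / 2%:R else (1 - Ci) / 2%:R)
       else 0 (* impossible case: not in A *))
  end.

(* Gradings: lambda in IS^{(l,r)} = functions on 'I_(l+r);
   coordinates i < l are the "left" ones, i >= l the "right" ones. *)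
Definition grade (l r : nat) := {ffun 'I_(l + r) -> IS}.

Definition grade0 l r : grade l r := [ffun => h0].

Definition s_val l r (la : grade l r) : rat :=
  \sum_(i < l + r | (i < l)%N) IS_val (la i)
  - \sum_(i < l + r | (l <= i)%N) IS_val (la i).

Definition star l r (la1 la2 la : grade l r) : bool :=
  [forall i, fus (la1 i) (la2 i) (la i)].

Definition Aset l r (la0 la1 la2 la3 : grade l r) : {set grade l r} :=
  [set la : grade l r | [forall i, inA1 (la0 i) (la1 i) (la2 i) (la3 i) (la i)]].

Definition Bmul l r (la la' la0 la1 la2 la3 : grade l r) : CC :=
  (\prod_(i < l + r | (i < l)%N) B1 (la i) (la' i) (la0 i) (la1 i) (la2 i) (la3 i))
  * (\prod_(i < l + r | (l <= i)%N)
       conjc (B1 (la i) (la' i) (la0 i) (la1 i) (la2 i) (la3 i))).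

(* A graded finite-dimensional algebra over C is encoded by
   - a finite-dimensional C-vector space V (vectType),
   - projections pr la : 'End(V) giving the direct sum decomposition
     V = (+)_la S_la with S_la = image of pr la,
   - a bilinear product mul and a unit one. *)
Section Framed.
Variables (l r : nat) (V : vectType CC) (pr : grade l r -> 'End(V))
          (mul : V -> V -> V) (one : V).

Definition homog (la : grade l r) (v : V) : Prop := pr la v = v.

Definition mulcomp (la : grade l r) (a b : V) : V := pr la (mul a b).

Definition is_graded_decomp : Prop :=
  [/\ forall la v, pr la (pr la v) = pr la v,
      forall la mu v, la != mu -> pr la (pr mu v) = 0
    & forall v, \sum_la pr la v = v].

Definition is_bilinear : Prop :=
  (forall b, linear (fun a => mul a b)) /\ (forall a, linear (mul a)).

Definition is_framed_algebra : Prop :=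
  [/\ is_graded_decomp /\ is_bilinear,
   forall la, ~~ (s_val la \is a Num.int) -> forall v, pr la v = 0,
   [/\ one != 0, homog (grade0 l r) one,
       (forall v, homog (grade0 l r) v -> exists k : CC, v = k *: one)
     & forall v, mul one v = v /\ mul v one = v],
   forall la1 la2 a b, homog la1 a -> homog la2 b ->
     forall la, ~~ star la1 la2 la -> mulcomp la a b = 0
  &
   forall la0 la1 la2 la3 a1 a2 a3,
     homog la1 a1 -> homog la2 a2 -> homog la3 a3 ->
     forall la', la' \in Aset la0 la2 la1 la3 ->
       mulcomp la0 a2 (mulcomp la' a1 a3)
       = \sum_(la in Aset la0 la1 la2 la3)
           Bmul la la' la0 la1 la2 la3 *: mulcomp la0 a1 (mulcomp la a2 a3)].

Definition is_ideal (M : {vspace V}) : Prop :=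
  (forall la m, m \in M -> pr la m \in M) /\
  (forall s m, m \in M -> mul s m \in M).

Definition is_simple : Prop :=
  forall M : {vspace V}, is_ideal M -> M = 0%VS \/ M = fullv.

End Framed.

Definition bits (l r : nat) := {ffun 'I_(l + r) -> bool}.

Definition bxor l r (x y : bits l r) : bits l r := [ffun i => x i (+) y i].
Definition band l r (x y : bits l r) : bits l r := [ffun i => x i && y i].
Definition bperp l r (x : bits l r) : bits l r := [ffun i => ~~ x i].
Definition bzero l r : bits l r := [ffun => false].

Definition grade_of l r (d c : bits l r) : grade l r :=
  [ffun i => if d i then h116 else if c i then h12 else h0].

Definition bnorm l r (c : bits l r) : int :=
  (#|[set i : 'I_(l + r) | c i && (i < l)%N]|%:Z
   - #|[set i : 'I_(l + r) | c i && (l <= i)%N]|%:Z)%R.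

Definition in_Z2d l r (d g : bits l r) : bool := band d g == g.

Definition msign (k : int) : CC := (-1) ^ k.
(* (-1)^{k/2} (k is even in the intended use) *)
Definition msign_half (k : int) : CC := (-1) ^ (k %/ 2)%Z.

Definition in_CS l r (V : vectType CC) (pr : grade l r -> 'End(V)) (al : bits l r) :=
  exists v, v != 0 /\ homog pr (grade_of (bzero l r) al) v.
Definition in_IS l r (V : vectType CC) (pr : grade l r -> 'End(V)) (d c : bits l r) :=
  band d c = bzero l r /\ exists v, v != 0 /\ homog pr (grade_of d c) v.

(* Main.v *)
Require Import Defs.
From Stdlib Require Import Reals.
From HB Require Import structures.
From mathcomp Require Import all_boot all_algebra all_field.
From mathcomp Require Import complex.
From mathcomp Require Import Rstruct.
Import GRing.Theory Num.Theory.
From mathcomp Require Import ring zify.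
Set Implicit Arguments. Unset Strict Implicit. Unset Printing Implicit Defensive.
Local Open Scope ring_scope.


Section Basic.
Variables (l r : nat) (V : vectType CC) (pr : grade l r -> 'End(V))
          (mul : V -> V -> V) (one : V).
Hypothesis HS : is_framed_algebra pr mul one.
Let HD : is_graded_decomp pr. Proof. by case: HS => [[]]. Qed.
Let HD' := HD. 
Local Ltac hd := move: HD'; rewrite /is_graded_decomp => -[H1 H2 H3].
Let HB : is_bilinear mul. Proof. by case: HS => [[]]. Qed.
Let HB' := HB.

Lemma prK la v : pr la (pr la v) = pr la v.
Proof. by hd; auto. Qed.
Lemma pr_ne la mu v : la != mu -> pr la (pr mu v) = 0.
Proof. by hd; auto. Qed.
Lemma pr_sum v : \sum_la pr la v = v.
Proof. by hd; auto. Qed.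

Lemma linP_morph (f : V -> V) : linear f ->
  [/\ f 0 = 0, forall u v, f (u + v) = f u + f v & forall k u, f (k *: u) = k *: f u].
Proof.
move=> lf.
have f0 : f 0 = 0.
  have := lf 1 0 0; rewrite !scale1r addr0 => /(congr1 (fun x => x - f 0)).
  by rewrite subrr addrK => <-.
split=> // [u v|k u]; first by have := lf 1 u v; rewrite !scale1r.
by have := lf k u 0; rewrite !addr0 f0 addr0.
Qed.

Lemma mulr_lin a : linear (mul a).
Proof. by move: HB'; rewrite /is_bilinear => -[]. Qed.
Lemma mull_lin b : linear (fun a => mul a b).
Proof. by move: HB'; rewrite /is_bilinear => -[]. Qed.

Lemma Mul0l b : mul 0 b = 0.
Proof. by case: (linP_morph (mull_lin b)). Qed.
Lemma Mul0r a : mul a 0 = 0.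
Proof. by case: (linP_morph (mulr_lin a)). Qed.
Lemma MulZr a k b : mul a (k *: b) = k *: mul a b.
Proof. by case: (linP_morph (mulr_lin a)). Qed.
Lemma MulDr a u v : mul a (u + v) = mul a u + mul a v.
Proof. by case: (linP_morph (mulr_lin a)). Qed.
Lemma MulDl b u v : mul (u + v) b = mul u b + mul v b.
Proof. by case: (linP_morph (mull_lin b)) => _ H _; apply: H. Qed.
Lemma Mul_sumr a (I : finType) (F : I -> V) :
  mul a (\sum_i F i) = \sum_i mul a (F i).
Proof. exact: (big_morph _ (MulDr a) (Mul0r a)). Qed.
Lemma Mul_suml b (I : finType) (F : I -> V) :
  mul (\sum_i F i) b = \sum_i mul (F i) b.
Proof. exact: (big_morph (fun x => mul x b) (MulDl b) (Mul0l b)). Qed.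

Lemma Mul1l v : mul one v = v. Proof. by case: HS => _ _ [_ _ _ H] _ _; case: (H v). Qed.
Lemma Mul1r v : mul v one = v. Proof. by case: HS => _ _ [_ _ _ H] _ _; case: (H v). Qed.

Lemma homog_ne la mu v : homog pr la v -> mu != la -> pr mu v = 0.
Proof. by rewrite /homog => <- H; rewrite pr_ne. Qed.

Lemma mul_single x y nu :
  (forall la, la != nu -> mulcomp pr mul la x y = 0) -> mul x y = mulcomp pr mul nu x y.
Proof.
move=> H; rewrite -[LHS]pr_sum (bigD1 nu) //= big1 ?addr0 // => la /H.
Qed.

Lemma FA3 la1 la2 a b : homog pr la1 a -> homog pr la2 b ->
     forall la, ~~ star la1 la2 la -> mulcomp pr mul la a b = 0.
Proof. by move: HS; rewrite /is_framed_algebra => -[_ _ _ H _]; apply: H. Qed.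

Lemma FA4 la0 la1 la2 la3 a1 a2 a3 :
     homog pr la1 a1 -> homog pr la2 a2 -> homog pr la3 a3 ->
     forall la', la' \in Aset la0 la2 la1 la3 ->
       mulcomp pr mul la0 a2 (mulcomp pr mul la' a1 a3)
       = \sum_(la in Aset la0 la1 la2 la3)
           Bmul la la' la0 la1 la2 la3 *: mulcomp pr mul la0 a1 (mulcomp pr mul la a2 a3).
Proof. by move: HS; rewrite /is_framed_algebra => -[_ _ _ _ H]; apply: H. Qed.


Lemma FA2one : homog pr (grade0 l r) one.
Proof. by move: HS; rewrite /is_framed_algebra => -[_ _ [_ H _ _] _ _]. Qed.
Lemma FA2sc v : homog pr (grade0 l r) v -> exists k : CC, v = k *: one.
Proof. by move: HS; rewrite /is_framed_algebra => -[_ _ [_ _ H _] _ _]; apply: H. Qed.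
Lemma one_neq0 : one != 0.
Proof. by move: HS; rewrite /is_framed_algebra => -[_ _ [H _ _ _] _ _]. Qed.

Lemma pr0 la : pr la 0 = 0. Proof. exact: linear0. Qed.
Lemma prZ la k v : pr la (k *: v) = k *: pr la v. Proof. exact: linearZ. Qed.

Lemma mulcomp0r la x : mulcomp pr mul la x 0 = 0.
Proof. by rewrite /mulcomp Mul0r pr0. Qed.
Lemma mulcomp0l la x : mulcomp pr mul la 0 x = 0.
Proof. by rewrite /mulcomp Mul0l pr0. Qed.
Lemma mulcompZr la x k y : mulcomp pr mul la x (k *: y) = k *: mulcomp pr mul la x y.
Proof. by rewrite /mulcomp MulZr prZ. Qed.

Lemma homog_pr la v : homog pr la (pr la v).
Proof. exact: prK. Qed.
Lemma homog_mulcomp la x y : homog pr la (mulcomp pr mul la x y).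
Proof. exact: prK. Qed.

Lemma fus_h0r x h : fus x h0 h = (h == x). Proof. by case: x; case: h. Qed.
Lemma fus_sym x y h : fus x y h = fus y x h. Proof. by case: x; case: y; case: h. Qed.

Lemma FA4single la0 la1 la2 la3 a1 a2 a3 la la' :
  homog pr la1 a1 -> homog pr la2 a2 -> homog pr la3 a3 ->
  la' \in Aset la0 la2 la1 la3 -> Aset la0 la1 la2 la3 = [set la] ->
  mulcomp pr mul la0 a2 (mulcomp pr mul la' a1 a3)
  = Bmul la la' la0 la1 la2 la3 *: mulcomp pr mul la0 a1 (mulcomp pr mul la a2 a3).
Proof.
move=> h1 h2 h3 hla' hA; rewrite (FA4 h1 h2 h3 hla') hA.
by rewrite big_set1.
Qed.

Lemma comm gx gy x y nu : homog pr gx x -> homog pr gy y -> star gx gy nu ->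
  mulcomp pr mul nu x y = Bmul gx gy nu gy gx (grade0 l r) *: mulcomp pr mul nu y x.
Proof.
move=> hx hy hs.
have e1 : mulcomp pr mul gy y one = y by rewrite /mulcomp Mul1r.
have e2 : mulcomp pr mul gx x one = x by rewrite /mulcomp Mul1r.
rewrite -{1}e1 -{2}e2; apply: (FA4single hy hx FA2one).
  rewrite inE; apply/forallP => i; rewrite /inA1 /grade0 ffunE fus_h0r eqxx /=.
  by move/forallP: hs => /(_ i).
apply/setP => la; rewrite !inE; apply/forallP/eqP => [H|->].
  apply/ffunP => i; move: (H i); rewrite /inA1 /grade0 ffunE fus_h0r.
  by case/andP => /eqP.
move=> i; rewrite /inA1 /grade0 ffunE fus_h0r eqxx /= fus_sym.
by move/forallP: hs => /(_ i).
Qed.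

End Basic.


Lemma kerfam (V : vectType CC) (I : finType) (F : I -> V -> V) :
  (forall i, linear (F i)) ->
  exists N : {vspace V}, forall v, (v \in N) = [forall i, F i v == 0].
Proof.
move=> lF.
pose fL i : {linear V -> V} := HB.pack (F i) (GRing.isLinear.Build _ _ _ _ (F i) (lF i)).
exists (\bigcap_i lker (linfun (fL i)))%VS => v.
rewrite memvE; apply/subv_bigcapP/forallP => [H i|H i _].
  by have := H i isT; rewrite -memvE memv_ker lfunE.
by rewrite -memvE memv_ker lfunE; apply: H.
Qed.

Definition IS_eqb (x y : IS) := match x, y with
  | h0, h0 | h12, h12 | h116, h116 => true | _, _ => false end.
Lemma eqIS x y : (x == y) = IS_eqb x y.
Proof. by case: x; case: y => //=; apply/eqP. Qed.

Definition f12 (h : IS) : IS := match h with h0 => h12 | h12 => h0 | h116 => h116 end.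
Definition act l r (al : bits l r) (G : grade l r) : grade l r :=
  [ffun i => if al i then f12 (G i) else G i].

Section Main.
Variables (l r : nat) (V : vectType CC) (pr : grade l r -> 'End(V))
          (mul : V -> V -> V) (one : V).
Hypothesis HS : is_framed_algebra pr mul one.
Hypothesis Hsimple : is_simple pr mul.
Variables (al : bits l r) (a : V).
Local Notation gA := (grade_of (bzero l r) al).
Hypothesis Ha : homog pr gA a.
Local Notation mc := (mulcomp pr mul).

Lemma gAE i : gA i = if al i then h12 else h0.
Proof. by rewrite !ffunE. Qed.

Lemma actK G : act al (act al G) = G.
Proof. by apply/ffunP => i; rewrite !ffunE; case: (al i); case: (G i). Qed.

Lemma starAG G la : star gA G la = (la == act al G).
Proof.
apply/forallP/eqP => [H|->].
  apply/ffunP => i; move: (H i); rewrite !ffunE.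
  by case: (al i); case: (G i); case: (la i); rewrite /= ?eqIS /=.
by move=> i; rewrite !ffunE; case: (al i); case: (G i); rewrite /= ?eqIS.
Qed.

Lemma starGA G la : star G gA la = (la == act al G).
Proof.
apply/forallP/eqP => [H|->].
  apply/ffunP => i; move: (H i); rewrite !ffunE.
  by case: (al i); case: (G i); case: (la i); rewrite /= ?eqIS /=.
by move=> i; rewrite !ffunE; case: (al i); case: (G i); rewrite /= ?eqIS.
Qed.

Lemma mulAv x G : homog pr G x -> mul a x = mc (act al G) a x.
Proof.
move=> hx; apply: (mul_single HS) => la ne.
by apply: (FA3 HS Ha hx); rewrite starAG.
Qed.

Lemma mulvA x G : homog pr G x -> mul x a = mc (act al G) x a.
Proof.
move=> hx; apply: (mul_single HS) => la ne.
by apply: (FA3 HS hx Ha); rewrite starGA.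
Qed.

Lemma K1sq : a != 0 -> mul a a != 0.
Proof.
move=> anz; apply/eqP => aa0.
have lin mu : linear (fun v => mul a (pr mu v)).
  by move=> k u v; rewrite linearP (MulDr HS) (MulZr HS).
have [N HN] := kerfam lin.
have idN : is_ideal pr mul N.
  split.
    move=> la m; rewrite !HN => /forallP H; apply/forallP => mu.
    case: (eqVneq mu la) => [->|ne]; first by rewrite (prK HS); exact: H.
    by rewrite (pr_ne HS) // (Mul0r HS).
  move=> s m; rewrite !HN => /forallP H; apply/forallP => mu.
  rewrite -(pr_sum HS s) (Mul_suml HS) linear_sum (Mul_sumr HS).
  apply/eqP/big1 => nu _.
  rewrite -(pr_sum HS m) (Mul_sumr HS) linear_sum (Mul_sumr HS).
  apply/big1 => rho _.
  have hs : homog pr nu (pr nu s) by exact: (prK HS).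
  have hm : homog pr rho (pr rho m) by exact: (prK HS).
  change (mul a (mc mu (pr nu s) (pr rho m)) = 0).
  have [st|nst] := boolP (star nu rho mu); last first.
    by rewrite (FA3 HS hs hm nst) (Mul0r HS).
  rewrite (mulAv (homog_mulcomp HS _ _ _)) [mc _ a _](FA4 HS hs Ha hm).
    apply: big1 => la _.
    by rewrite /mulcomp (eqP (H rho)) linear0 (Mul0r HS) linear0 scaler0.
  rewrite inE; apply/forallP => i; rewrite /inA1 (forallP st i) /=.
  by move: (starAG mu (act al mu)); rewrite eqxx => /forallP.
have aN : a \in N.
  rewrite HN; apply/forallP => mu; case: (eqVneq mu gA) => [->|ne].
    by rewrite Ha aa0.
  by rewrite (homog_ne HS Ha ne) (Mul0r HS).
case: (Hsimple idN) => NE.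
  by move: aN; rewrite NE memv0 (negbTE anz).
have : one \in N by rewrite NE memvf.
rewrite HN => /forallP /(_ (grade0 l r)); rewrite (FA2one HS) (Mul1r HS).
by rewrite (negbTE anz).
Qed.
End Main.


Ltac cringC := apply/eqP; rewrite eq_complex /=; apply/andP; split; apply/eqP; ring.

Lemma Ci2 : Ci * Ci = -1 :> CC. Proof. cringC. Qed.
Lemma conjCi : conjc Ci = - Ci. Proof. cringC. Qed.
Lemma conjN1 : conjc (-1 : CC) = -1. Proof. cringC. Qed.
Lemma conjNCi : conjc (- Ci) = Ci. Proof. cringC. Qed.
Lemma conj1 : conjc (1 : CC) = 1. Proof. cringC. Qed.
Lemma N1ne1 : (-1 : CC) != 1.
Proof.
rewrite eq_complex /= negb_and; apply/orP; left.
rewrite -subr_eq0 -opprD oppr_eq0. by rewrite paddr_eq0 ?ler01 ?oner_eq0.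
Qed.

Definition PB l r (f : 'I_(l + r) -> CC) : CC :=
  (\prod_(i < l + r | (i < l)%N) f i) * (\prod_(i < l + r | (l <= i)%N) conjc (f i)).

Lemma BmulE l r (la la' la0 la1 la2 la3 : grade l r) :
  Bmul la la' la0 la1 la2 la3 = PB (fun i => Defs.B1 (la i) (la' i) (la0 i) (la1 i) (la2 i) (la3 i)).
Proof. by []. Qed.

Lemma PB_mul l r (f g : 'I_(l + r) -> CC) : PB f * PB g = PB (fun i => f i * g i).
Proof.
rewrite /PB mulrACA -!big_split /=; f_equal.
by apply: eq_bigr => i _; rewrite rmorphM.
Qed.

Lemma PB_ext l r (f g : 'I_(l + r) -> CC) : (forall i, f i = g i) -> PB f = PB g.
Proof.
move=> e; rewrite /PB (eq_bigr _ (fun i _ => e i)).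
by rewrite (eq_bigr (fun i => conjc (g i)) (fun i _ => congr1 _ (e i))).
Qed.

Definition sgn (b : bool) : CC := if b then -1 else 1.
Definition Psign l r (c : bits l r) : CC := \prod_i sgn (c i).

Lemma PB_sgn l r (c : bits l r) : PB (fun i => sgn (c i)) = Psign c.
Proof.
rewrite /PB /Psign [RHS](bigID (fun i : 'I_(l + r) => (i < l)%N)) /=; f_equal.
apply: eq_big => [i|i _]; first by rewrite -leqNgt.
by case: (c i); rewrite /sgn ?conjN1 ?conj1.
Qed.

Lemma prod_if (I : finType) (P : pred I) (c : pred I) (x : CC) :
  \prod_(i | P i) (if c i then x else 1) = x ^+ #|[pred i | P i && c i]|.
Proof. by rewrite -big_mkcondr -prodr_const. Qed.

Lemma Psign_split l r (c : bits l r) :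
  Psign c = (-1) ^+ #|[pred i : 'I_(l + r) | (i < l)%N && c i]|
          * (-1) ^+ #|[pred i : 'I_(l + r) | (l <= i)%N && c i]|.
Proof.
rewrite /Psign (bigID (fun i : 'I_(l + r) => (i < l)%N)) /= -!prod_if.
f_equal; apply: eq_bigl => i; by rewrite -leqNgt.
Qed.

Lemma bnormE l r (c : bits l r) :
  bnorm c = (#|[pred i : 'I_(l + r) | (i < l)%N && c i]|%:Z
            - #|[pred i : 'I_(l + r) | (l <= i)%N && c i]|%:Z)%R.
Proof.
rewrite /bnorm; congr (Posz _ - Posz _); apply: eq_card => i;
  by rewrite !inE andbC.
Qed.

Lemma msign_bnorm l r (c : bits l r) : msign (bnorm c) = Psign c.
Proof.
rewrite bnormE Psign_split /msign exprzDr ?unitrN1 //.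
by rewrite -invr_expz -!exprnP invr_sign.
Qed.

Lemma msignD x y : msign (x + y) = msign x * msign y.
Proof. by rewrite /msign exprzDr ?unitrN1. Qed.

Lemma Psign_pm l r (c : bits l r) : Psign c = 1 \/ Psign c = -1.
Proof.
rewrite Psign_split -exprD -signr_odd; case: (odd _); [right|left]; by rewrite ?expr1 ?expr0.
Qed.


Lemma Ci_pow n m : (- Ci) ^+ (n + m.*2) * Ci ^+ n = (-1) ^+ m :> CC.
Proof.
rewrite exprD mulrAC -exprMn mulNr Ci2 opprK expr1n mul1r.
by rewrite -muln2 mulnC exprM sqrrN expr2 Ci2.
Qed.

Lemma Ci_pow' n m : (- Ci) ^+ n * Ci ^+ (n + m.*2) = (-1) ^+ m :> CC.
Proof.
rewrite exprD mulrA -exprMn mulNr Ci2 opprK expr1n mul1r.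
by rewrite -muln2 mulnC exprM expr2 Ci2.
Qed.

Lemma half_lem (nL nR : nat) : ~~ odd (nL + nR) ->
  (- Ci) ^+ nL * Ci ^+ nR = msign_half (nL%:Z - nR%:Z).
Proof.
rewrite /msign_half => ho.
case: (leqP nR nL) => h.
  have [k ek] : exists k, nL = (nR + k)%N by exists (nL - nR)%N; rewrite subnKC.
  have hk : ~~ odd k.
    by move: ho; rewrite ek addnC addnA addnn oddD odd_double.
  rewrite ek -(even_halfK hk) Ci_pow.
  have -> : ((nR + k./2.*2)%N%:Z - nR%:Z)%R = (k./2%:Z * 2)%R.
    rewrite -muln2; lia.
  by rewrite mulzK // exprnP.
have [k ek] : exists k, nR = (nL + k)%N by exists (nR - nL)%N; rewrite subnKC // ltnW.
have hk : ~~ odd k.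
  by move: ho; rewrite ek addnA addnn oddD odd_double.
rewrite ek -(even_halfK hk) Ci_pow'.
have -> : (nL%:Z - (nL + k./2.*2)%N%:Z)%R = ((- (k./2%:Z)) * 2)%R.
  rewrite -muln2; lia.
rewrite mulzK // -invr_expz -exprnP.
by rewrite invr_sign.
Qed.

Lemma PB_half l r (c : bits l r) : Psign c = 1 ->
  PB (fun i => if c i then - Ci else 1) = msign_half (bnorm c).
Proof.
move=> hp; rewrite bnormE -half_lem; last first.
  apply/negP => ho; move: hp; rewrite Psign_split -exprD -signr_odd ho expr1.
  by move/eqP; rewrite (negbTE N1ne1).
rewrite /PB prod_if.
rewrite (eq_bigr (fun i => if c i then Ci else 1)); last first.
  by move=> i _; case: (c i); rewrite ?conjNCi ?conj1.
by rewrite prod_if.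
Qed.


Ltac cring0 := apply/eqP; rewrite eq_complex /=; apply/andP; split; apply/eqP; ring.

Lemma two_neq0 : (1 + 1 : CC) != 0.
Proof. by rewrite addr_eq0 eq_sym; exact: N1ne1. Qed.

Lemma selfN (V : vectType CC) (x : V) : x = -1 *: x -> x = 0.
Proof.
move=> e; have : (1 + 1 : CC) *: x = 0 by rewrite scalerDl {1}e !scale1r scaleN1r addNr.
by move/eqP; rewrite scaler_eq0 (negbTE two_neq0) => /eqP.
Qed.

Lemma band_coord l r (d c : bits l r) : band d c = bzero l r -> forall i, d i && c i = false.
Proof. by move/ffunP => H i; move: (H i); rewrite !ffunE. Qed.

Section Main2.
Variables (l r : nat) (V : vectType CC) (pr : grade l r -> 'End(V))
          (mul : V -> V -> V) (one : V).
Hypothesis HS : is_framed_algebra pr mul one.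
Hypothesis Hsimple : is_simple pr mul.
Variables (al : bits l r) (a : V).
Local Notation gA := (grade_of (bzero l r) al).
Hypothesis Ha : homog pr gA a.
Hypothesis anz : a != 0.
Local Notation mc := (mulcomp pr mul).

Lemma act_gA : act al gA = grade0 l r.
Proof. by apply/ffunP => i; rewrite !ffunE; case: (al i). Qed.

Lemma K_alpha : Psign al = 1.
Proof.
case: (Psign_pm al) => // hm.
have st : star gA gA (grade0 l r) by rewrite starAG act_gA.
have := comm HS Ha Ha st; rewrite BmulE.
rewrite (PB_ext (g := fun i => sgn (al i))); last first.
  by move=> i; rewrite !ffunE; case: (al i).
rewrite PB_sgn hm => /selfN H.
by move: (K1sq HS Hsimple Ha anz); rewrite (mulAv HS Ha Ha) act_gA H eqxx.
Qed.

Lemma K2 d c x : band d c = bzero l r -> homog pr (grade_of d c) x ->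
  Psign (band d al) = 1 \/ x = 0.
Proof.
move=> hdc hx; case: (Psign_pm (band d al)) => hm; [by left | right].
have dc := band_coord hdc.
set G := grade_of d c; set nu := act al G.
have c1 := comm HS Ha hx (eq_ind_r _ (eqxx nu) (starAG al G nu) : star gA G nu).
have c2 := comm HS hx Ha (eq_ind_r _ (eqxx nu) (starGA al G nu) : star G gA nu).
have e : Bmul G gA nu gA G (grade0 l r) * Bmul gA G nu G gA (grade0 l r) = -1.
  rewrite !BmulE PB_mul -hm -PB_sgn; apply: PB_ext => i.
  rewrite !ffunE; move: (dc i).
  by case: (al i); case: (d i); case: (c i) => //= _; rewrite ?eqIS /=; cring0.
have z : mc nu x a = 0.
  by apply: selfN; rewrite -e -scalerA -c1 -c2.
have hk : homog pr (grade0 l r) (mc (grade0 l r) a a) by exact: (homog_mulcomp HS).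
have [k ek] := FA2sc HS hk.
have e4 : mc G x (mc (grade0 l r) a a) = Bmul nu (grade0 l r) G gA G gA *: mc G a (mc nu x a).
  apply: (FA4single HS Ha hx Ha).
    rewrite inE; apply/forallP => i; rewrite /inA1 !ffunE; move: (dc i).
    by case: (al i); case: (d i); case: (c i) => //= _; rewrite ?eqIS /=.
  apply/setP => la; rewrite !inE; apply/forallP/eqP => [H|->].
    apply/ffunP => i; move: (H i); rewrite /inA1 !ffunE; move: (dc i).
    by case: (al i); case: (d i); case: (c i); case: (la i) => //= _; rewrite ?eqIS /=.
  move=> i; rewrite /inA1 !ffunE; move: (dc i).
  by case: (al i); case: (d i); case: (c i) => //= _; rewrite ?eqIS /=.
move: e4; rewrite z (mulcomp0r HS) scaler0 ek (mulcompZr HS) /mulcomp (Mul1r HS) hx.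
move/eqP; rewrite scaler_eq0 => /orP [/eqP k0|/eqP //].
move: (K1sq HS Hsimple Ha anz); rewrite (mulAv HS Ha Ha) act_gA ek k0 scale0r.
by rewrite eqxx.
Qed.

End Main2.


Ltac cring := rewrite /e_m_pi_i_8 /Ci /sgn /=;
  apply/eqP; rewrite eq_complex /=; apply/andP; split; apply/eqP; ring.

Lemma Z2d_coord l r (d1 d2 g : bits l r) : in_Z2d (band d1 d2) g ->
  forall i, (d1 i && d2 i && g i) = g i.
Proof. by move/eqP/ffunP => H i; move: (H i); rewrite !ffunE. Qed.

Section Part1.
Variables (l r : nat) (V : vectType CC) (pr : grade l r -> 'End(V))
          (mul : V -> V -> V) (one : V).
Hypothesis HS : is_framed_algebra pr mul one.
Variables (al d1 c1 d2 c2 : bits l r) (a v1 v2 : V).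
Local Notation gA := (grade_of (bzero l r) al).
Hypothesis Ha : homog pr gA a.
Hypothesis hdc1 : band d1 c1 = bzero l r.
Hypothesis hdc2 : band d2 c2 = bzero l r.
Hypothesis Hv1 : homog pr (grade_of d1 c1) v1.
Hypothesis Hv2 : homog pr (grade_of d2 c2) v2.
Hypothesis Hev1 : Psign (band d1 al) = 1.
Local Notation mc := (mulcomp pr mul).

Lemma part1 g : in_Z2d (band d1 d2) g ->
     let d := bxor d1 d2 in
     mul a (mc (grade_of d (bxor (band (bperp d) (bxor c1 c2)) g)) v1 v2)
     = (msign_half (bnorm (band d1 al))
        * msign (bnorm (band al c1) + bnorm (band (band d1 d2) al)
                 + bnorm (band g al) + bnorm (band (band d1 al) c2)))
       *: mc (grade_of d (bxor (band (bperp d) (bxor (bxor c1 c2) al)) g))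
                  v1 (mul a v2).
Proof.
move=> hg d.
have dc1 := band_coord hdc1; have dc2 := band_coord hdc2; have gc := Z2d_coord hg.
set lp := grade_of d _; set lR := grade_of d _.
rewrite (mulAv HS Ha (homog_mulcomp HS lp v1 v2)) (mulAv HS Ha Hv2).
have -> : act al lp = lR.
  apply/ffunP => i; rewrite !ffunE; move: (dc1 i) (dc2 i) (gc i).
  by case: (al i); case: (d1 i); case: (c1 i); case: (d2 i); case: (c2 i); case: (g i).
rewrite (FA4single HS Hv1 Ha Hv2 (la := act al (grade_of d2 c2))); first last.
- apply/setP => la; rewrite !inE; apply/forallP/eqP => [H|->].
    apply/ffunP => i; move: (H i); rewrite /inA1 !ffunE; move: (dc1 i) (dc2 i) (gc i).
    by case: (al i); case: (d1 i); case: (c1 i); case: (d2 i); case: (c2 i); case: (g i);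
      case: (la i) => //=; rewrite ?eqIS.
  move=> i; rewrite /inA1 !ffunE; move: (dc1 i) (dc2 i) (gc i).
  by case: (al i); case: (d1 i); case: (c1 i); case: (d2 i); case: (c2 i); case: (g i);
    rewrite //= ?eqIS.
- rewrite inE; apply/forallP => i; rewrite /inA1 !ffunE; move: (dc1 i) (dc2 i) (gc i).
  by case: (al i); case: (d1 i); case: (c1 i); case: (d2 i); case: (c2 i); case: (g i);
    rewrite //= ?eqIS.
congr (_ *: _).
rewrite 3!msignD !msign_bnorm -!PB_sgn -(PB_half Hev1) !PB_mul BmulE.
apply: PB_ext => i; rewrite !ffunE; move: (dc1 i) (dc2 i) (gc i).
by case: (al i); case: (d1 i); case: (c1 i); case: (d2 i); case: (c2 i); case: (g i);
  rewrite //= ?eqIS //= => _ _ _; cring.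
Qed.

End Part1.

Lemma star_act l r (al : bits l r) G1 G2 la :
  star (act al G1) G2 (act al la) = star G1 G2 la.
Proof.
apply/forallP/forallP => H i; move: (H i); rewrite !ffunE;
  by case: (al i); case: (G1 i); case: (G2 i); case: (la i); rewrite /= ?eqIS.
Qed.

Section Part2.
Variables (l r : nat) (V : vectType CC) (pr : grade l r -> 'End(V))
          (mul : V -> V -> V) (one : V).
Hypothesis HS : is_framed_algebra pr mul one.
Variables (al d1 c1 d2 c2 : bits l r) (a v1 v2 : V).
Local Notation gA := (grade_of (bzero l r) al).
Local Notation g1 := (grade_of d1 c1).
Local Notation g2 := (grade_of d2 c2).
Hypothesis Ha : homog pr gA a.
Hypothesis hdc1 : band d1 c1 = bzero l r.
Hypothesis hdc2 : band d2 c2 = bzero l r.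
Hypothesis Hv1 : homog pr g1 v1.
Hypothesis Hv2 : homog pr g2 v2.
Hypothesis HA : Psign al = 1.
Hypothesis Hev1 : Psign (band d1 al) = 1.
Hypothesis Hev2 : Psign (band d2 al) = 1.
Local Notation mc := (mulcomp pr mul).

Lemma part2 : mul a (mul v1 v2)
  = msign (bnorm (band (bperp d1) al) + bnorm (band (band d1 al) c2))
    *: mul (mul a v1) v2.
Proof.
have dc1 := band_coord hdc1; have dc2 := band_coord hdc2.
set w := mul a v1.
have hw : homog pr (act al g1) w.
  by rewrite /w (mulAv HS Ha Hv1); exact: (homog_mulcomp HS).
rewrite -{1}(pr_sum HS (mul v1 v2)) (Mul_sumr HS).
rewrite -(pr_sum HS (mul w v2)) scaler_sumr [RHS](reindex_inj (inv_inj (actK al))).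
apply: eq_bigr => la _.
change (mul a (mc la v1 v2) = msign (bnorm (band (bperp d1) al) + bnorm (band (band d1 al) c2))
   *: mc (act al la) w v2).
rewrite (mulAv HS Ha (homog_mulcomp HS la v1 v2)).
have [st|nst] := boolP (star g1 g2 la); last first.
  rewrite (FA3 HS Hv1 Hv2 nst) (mulcomp0r HS) (FA3 HS hw Hv2) ?scaler0 //.
  by rewrite star_act.
set nu := act al la.
have c1' := comm HS hw Hv2 (eq_ind_r is_true st (star_act al g1 g2 la) : star (act al g1) g2 nu).
have c3 := comm HS Hv1 Hv2 st.
have b2 : mc nu v2 w = Bmul la (act al g1) nu gA g2 g1 *: mc nu a (mc la v2 v1).
  rewrite {1}/w (mulAv HS Ha Hv1); apply: (FA4single HS Ha Hv2 Hv1).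
    rewrite inE; apply/forallP => i; move: (forallP st i).
    rewrite /inA1 !ffunE; move: (dc1 i) (dc2 i).
    by case: (al i); case: (d1 i); case: (c1 i); case: (d2 i); case: (c2 i); case: (la i);
      rewrite //= ?eqIS.
  apply/setP => la'; rewrite !inE; apply/forallP/eqP => [H|->].
    apply/ffunP => i; move: (H i) (forallP st i); rewrite /inA1 !ffunE; move: (dc1 i) (dc2 i).
    by case: (al i); case: (d1 i); case: (c1 i); case: (d2 i); case: (c2 i); case: (la i);
      case: (la' i); rewrite //= ?eqIS.
  move=> i; move: (forallP st i); rewrite /inA1 !ffunE; move: (dc1 i) (dc2 i).
  by case: (al i); case: (d1 i); case: (c1 i); case: (d2 i); case: (c2 i); case: (la i);
    rewrite //= ?eqIS.
rewrite c3 (mulcompZr HS) c1' b2 !scalerA; congr (_ *: _).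
transitivity (Psign al * Psign (band d1 al) * Psign (band d2 al)
   * Bmul g1 g2 la g2 g1 (grade0 l r)); first by rewrite HA Hev1 Hev2 !mul1r.
rewrite msignD !msign_bnorm -!PB_sgn !BmulE !PB_mul.
apply: PB_ext => i; move: (forallP st i); rewrite !ffunE; move: (dc1 i) (dc2 i).
by case: (al i); case: (d1 i); case: (c1 i); case: (d2 i); case: (c2 i); case: (la i);
  rewrite //= ?eqIS //= => _ _ _; cring.
Qed.

End Part2.

Theorem mainTheorem11 (l r : nat) (V : vectType CC) (pr : grade l r -> 'End(V))
  (mul : V -> V -> V) (one : V)
  (HS : is_framed_algebra pr mul one) (Hsimple : is_simple pr mul)
  (al d1 c1 d2 c2 : bits l r)
  (Hal : in_CS pr al) (H1 : in_IS pr d1 c1) (H2 : in_IS pr d2 c2)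
  (a v1 v2 : V)
  (Ha : homog pr (grade_of (bzero l r) al) a)
  (Hv1 : homog pr (grade_of d1 c1) v1)
  (Hv2 : homog pr (grade_of d2 c2) v2) :
  (forall g : bits l r, in_Z2d (band d1 d2) g ->
     let d := bxor d1 d2 in
     mul a (mulcomp pr mul (grade_of d (bxor (band (bperp d) (bxor c1 c2)) g)) v1 v2)
     = (msign_half (bnorm (band d1 al))
        * msign (bnorm (band al c1) + bnorm (band (band d1 d2) al)
                 + bnorm (band g al) + bnorm (band (band d1 al) c2)))
       *: mulcomp pr mul (grade_of d (bxor (band (bperp d) (bxor (bxor c1 c2) al)) g))
                  v1 (mul a v2))
  /\
  mul a (mul v1 v2)
  = msign (bnorm (band (bperp d1) al) + bnorm (band (band d1 al) c2))
    *: mul (mul a v1) v2.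
Proof.
Proof.
case: H1 => hdc1 _; case: H2 => hdc2 _.
case: (eqVneq a 0) => [a0|anz].
  subst a; split; last by rewrite !(Mul0l HS) scaler0.
  by move=> g _ /=; rewrite !(Mul0l HS) (mulcomp0r HS) scaler0.
have HA := K_alpha HS Hsimple Ha anz.
case: (K2 HS Hsimple Ha anz hdc1 Hv1) => [e1|v10].
  case: (K2 HS Hsimple Ha anz hdc2 Hv2) => [e2|v20].
    split; first by move=> g hg; exact: (part1 HS Ha hdc1 hdc2 Hv1 Hv2 e1 hg).
    exact: (part2 HS Ha hdc1 hdc2 Hv1 Hv2 HA e1 e2).
  subst v2; split; last by rewrite !(Mul0r HS) scaler0.
  by move=> g _ /=; rewrite !(mulcomp0r HS) (Mul0r HS) (mulcomp0r HS) scaler0.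
subst v1; split; last by rewrite !(Mul0l HS) (Mul0r HS) (Mul0l HS) scaler0.
by move=> g _ /=; rewrite !(mulcomp0l HS) (Mul0r HS) scaler0.
Qed.
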